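(* Let $\mathcal M=(M,<,+,0,\ldots)$ be a definably complete locally o-minimal expansion of an ordered group. Let $(G,d_G)$ be a definably compact definable metric group and $(X,d_X)$ a definable metric space, with $G$ acting on $X$ by a definable continuous left action. Then for every $G$-invariant definable closed subset $A$ of $X$ there is a definable continuous $G$-invariant function $f:X\to M$ with $f^{-1}(0)=A$.
   Context: ''Definable'' means definable in $\mathcal M$ with parameters. $\mathcal M$ is an expansion of an ordered group with dense order without endpoints; locally o-minimal: for every definable $Y\subseteq M$ and $a\in M$ there is an open interval $I\ni a$ with $Y\cap I$ a finite union of points and open intervals; definably complete: every definable subset of $M$ has sup and inf in $M\cup\{\pm\infty\}$. A definable metric space $(X,d_X)$ is a definable set with a definable $d_X:X\times X\to\{a\ge0\}$ satisfying $d_X(x,y)=0\iff x=y$, symmetry and triangle inequality, topologized by the open balls. A definable metric group is a definable metric space whose underlying set is a definable group with multiplication and inversion continuous. It is definably compact if every definable filtered family (any two members contain a common member) of nonempty closed subsets has nonempty intersection. $f$ is $G$-invariant if $f(gx)=f(x)$ for all $g\in G$, $x\in X$. *)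

(* Defs.v *)
From Stdlib Require List.
From mathcomp Require Import all_boot.
Set Implicit Arguments.
Unset Strict Implicit.
Unset Printing Implicit Defensive.

Definition tfst (M : Type) (n m : nat) (z : 'I_(n + m) -> M) : 'I_n -> M :=
  fun i => z (lshift m i).
Definition tsnd (M : Type) (n m : nat) (z : 'I_(n + m) -> M) : 'I_m -> M :=
  fun i => z (rshift n i).
Definition tcat (M : Type) (n m : nat) (x : 'I_n -> M) (y : 'I_m -> M)
  : 'I_(n + m) -> M :=
  fun i => match split i with inl j => x j | inr k => y k end.
Definition tconst1 (M : Type) (a : M) : 'I_1 -> M := fun _ => a.

(* The definable sets (with parameters) are given as a "structure" on M in  *)
(* the sense of van den Dries (Tame topology, Ch. 1 (2.1)): a family of     *)
(* Boolean algebras S_n of subsets of M^n, closed under products with M,    *)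
(* containing diagonals, closed under projections; it contains the graphs   *)
(* of <, + and all singletons {a} (parameters).                              *)

Record dclomStructure := DclomStructure {
  carrier :> Type;
  lt : carrier -> carrier -> Prop;
  add : carrier -> carrier -> carrier;
  zero : carrier;
  neg : carrier -> carrier;
  defn : forall n : nat, (('I_n -> carrier) -> Prop) -> Prop;
  addA : forall x y z, add x (add y z) = add (add x y) z;
  add0r : forall x, add zero x = x;
  addr0 : forall x, add x zero = x;
  addNr : forall x, add (neg x) x = zero;
  addrN : forall x, add x (neg x) = zero;
  lt_irr : forall x, ~ lt x x;
  lt_trans : forall x y z, lt x y -> lt y z -> lt x z;
  lt_total : forall x y, lt x y \/ x = y \/ lt y x;
  lt_addl : forall a b c, lt a b -> lt (add c a) (add c b);
  lt_addr : forall a b c, lt a b -> lt (add a c) (add b c);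
  lt_dense : forall x y, lt x y -> exists z, lt x z /\ lt z y;
  lt_noendpoints : forall x, exists y z, lt y x /\ lt x z;
  defn_full : forall n, defn (fun _ : 'I_n -> carrier => True);
  defn_compl : forall n (A : ('I_n -> carrier) -> Prop), defn A -> defn (fun x => ~ A x);
  defn_union : forall n (A B : ('I_n -> carrier) -> Prop), defn A -> defn B -> defn (fun x => A x \/ B x);
  defn_prodr : forall n (A : ('I_n -> carrier) -> Prop),
      defn A -> defn (fun z : 'I_(n + 1) -> carrier => A (tfst z));
  defn_prodl : forall n (A : ('I_n -> carrier) -> Prop),
      defn A -> defn (fun z : 'I_(1 + n) -> carrier => A (tsnd z));
  defn_diag : forall n (i j : 'I_n), defn (fun x => x i = x j);
  defn_proj : forall n (A : ('I_(n + 1) -> carrier) -> Prop), defn A ->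
      defn (fun x : 'I_n -> carrier => exists a : carrier, A (tcat x (tconst1 a)));
  defn_lt : defn (fun x : 'I_2 -> carrier => lt (x (inord 0)) (x (inord 1)));
  defn_add : defn (fun x : 'I_3 -> carrier => x (inord 2) = add (x (inord 0)) (x (inord 1)));
  defn_const : forall a : carrier, defn (fun x : 'I_1 -> carrier => x ord0 = a);
  loc_omin : forall (Y : carrier -> Prop) (a : carrier),
      defn (fun x : 'I_1 -> carrier => Y (x ord0)) ->
      exists b c (pts : seq carrier) (ivs : seq (carrier * carrier)),
        lt b a /\ lt a c /\
        forall x, lt b x -> lt x c ->
          (Y x <-> (List.In x pts \/
                    exists p q, List.In (p, q) ivs /\ lt p x /\ lt x q));
  def_sup : forall (Y : carrier -> Prop),
      defn (fun x : 'I_1 -> carrier => Y (x ord0)) -> (exists y, Y y) ->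
      (exists b, forall y, Y y -> ~ lt b y) ->
      exists s, (forall y, Y y -> ~ lt s y) /\
                (forall b, (forall y, Y y -> ~ lt b y) -> ~ lt b s);
  def_inf : forall (Y : carrier -> Prop),
      defn (fun x : 'I_1 -> carrier => Y (x ord0)) -> (exists y, Y y) ->
      (exists b, forall y, Y y -> ~ lt y b) ->
      exists s, (forall y, Y y -> ~ lt y s) /\
                (forall b, (forall y, Y y -> ~ lt y b) -> ~ lt s b)
}.

Section Definable.
Variable R : dclomStructure.
Local Notation M := (carrier R).

Definition def_map (n k : nat) (A : ('I_n -> M) -> Prop)
    (f : ('I_n -> M) -> ('I_k -> M)) : Prop :=
  defn (fun z : 'I_(n + k) -> M => A (tfst z) /\ tsnd z = f (tfst z)).

Definition def_fun (n : nat) (A : ('I_n -> M) -> Prop) (f : ('I_n -> M) -> M) :=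
  def_map A (fun x => tconst1 (f x)).

Definition pos (e : M) := lt (zero R) e.

Record defMetricSpace := DefMetricSpace {
  msdim : nat;
  mspts : ('I_msdim -> M) -> Prop;
  msdist : ('I_msdim -> M) -> ('I_msdim -> M) -> M;
  mspts_def : defn mspts;
  msdist_def : def_fun (fun w : 'I_(msdim + msdim) -> M =>
                           mspts (tfst w) /\ mspts (tsnd w))
                       (fun w => msdist (tfst w) (tsnd w));
  msdist_ge0 : forall x y, mspts x -> mspts y -> ~ lt (msdist x y) (zero R);
  msdist_eq0 : forall x y, mspts x -> mspts y -> (msdist x y = zero R <-> x = y);
  msdist_sym : forall x y, mspts x -> mspts y -> msdist x y = msdist y x;
  msdist_tri : forall x y z, mspts x -> mspts y -> mspts z ->
      ~ lt (add (msdist x y) (msdist y z)) (msdist x z)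
}.

Arguments msdim : clear implicits.
Arguments mspts : clear implicits.
Arguments msdist : clear implicits.

Definition closed_in (X : defMetricSpace) (A : ('I_(msdim X) -> M) -> Prop) :=
  (forall x, A x -> mspts X x) /\
  forall x, mspts X x -> ~ A x ->
    exists e, pos e /\ forall y, mspts X y -> lt (msdist X x y) e -> ~ A y.

Definition continuous_on (X : defMetricSpace) (f : ('I_(msdim X) -> M) -> M) :=
  forall x, mspts X x -> forall a b, lt a (f x) -> lt (f x) b ->
    exists e, pos e /\ forall y, mspts X y -> lt (msdist X x y) e ->
      lt a (f y) /\ lt (f y) b.

Record defMetricGroup := DefMetricGroup {
  gspace :> defMetricSpace;
  gmul : ('I_(msdim gspace) -> M) -> ('I_(msdim gspace) -> M) -> ('I_(msdim gspace) -> M);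
  ginv : ('I_(msdim gspace) -> M) -> ('I_(msdim gspace) -> M);
  gone : 'I_(msdim gspace) -> M;
  gmul_def : def_map (fun w : 'I_(msdim gspace + msdim gspace) -> M =>
                        mspts gspace (tfst w) /\ mspts gspace (tsnd w))
                     (fun w => gmul (tfst w) (tsnd w));
  ginv_def : def_map (mspts gspace) ginv;
  gone_in : mspts gspace gone;
  gmul_in : forall g h, mspts gspace g -> mspts gspace h -> mspts gspace (gmul g h);
  ginv_in : forall g, mspts gspace g -> mspts gspace (ginv g);
  gmulA : forall g h k, mspts gspace g -> mspts gspace h -> mspts gspace k ->
      gmul g (gmul h k) = gmul (gmul g h) k;
  gmul1g : forall g, mspts gspace g -> gmul gone g = g;
  gmulg1 : forall g, mspts gspace g -> gmul g gone = g;
  gmulVg : forall g, mspts gspace g -> gmul (ginv g) g = gone;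
  gmulgV : forall g, mspts gspace g -> gmul g (ginv g) = gone;
  gmul_cont : forall g h, mspts gspace g -> mspts gspace h ->
      forall e, pos e -> exists d, pos d /\
        forall g' h', mspts gspace g' -> mspts gspace h' ->
          lt (msdist gspace g g') d -> lt (msdist gspace h h') d ->
          lt (msdist gspace (gmul g h) (gmul g' h')) e;
  ginv_cont : forall g, mspts gspace g ->
      forall e, pos e -> exists d, pos d /\
        forall g', mspts gspace g' -> lt (msdist gspace g g') d ->
          lt (msdist gspace (ginv g) (ginv g')) e
}.

Arguments gspace : clear implicits.
Arguments gmul : clear implicits.
Arguments ginv : clear implicits.
Arguments gone : clear implicits.

(* A definable family is given by a
   definable parameter set T in M^k and a definable C in M^(k+dim); its
   members are the fibers C_t = {g | (t,g) in C}, t in T. *)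
Definition def_compact (X : defMetricSpace) : Prop :=
  forall (k : nat) (T : ('I_k -> M) -> Prop)
         (C : ('I_(k + msdim X) -> M) -> Prop),
    defn T -> defn C ->
    (exists t, T t) ->
    (forall t, T t -> closed_in (X:=X) (fun g => C (tcat t g))) ->
    (forall t, T t -> exists g, C (tcat t g)) ->
    (forall s t, T s -> T t -> exists u, T u /\
        forall g, C (tcat u g) -> C (tcat s g) /\ C (tcat t g)) ->
    exists g, forall t, T t -> C (tcat t g).

Record defAction (G : defMetricGroup) (X : defMetricSpace) := DefAction {
  act :> ('I_(msdim G) -> M) -> ('I_(msdim X) -> M) -> ('I_(msdim X) -> M);
  act_def : def_map (fun w : 'I_(msdim G + msdim X) -> M =>
                       mspts G (tfst w) /\ mspts X (tsnd w))
                    (fun w => act (tfst w) (tsnd w));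
  act_in : forall g x, mspts G g -> mspts X x -> mspts X (act g x);
  act1 : forall x, mspts X x -> act (gone G) x = x;
  actM : forall g h x, mspts G g -> mspts G h -> mspts X x ->
      act g (act h x) = act (gmul G g h) x;
  act_cont : forall g x, mspts G g -> mspts X x ->
      forall e, pos e -> exists d, pos d /\
        forall g' x', mspts G g' -> mspts X x' ->
          lt (msdist G g g') d -> lt (msdist X x x') d ->
          lt (msdist X (act g x) (act g' x')) e
}.

Definition invariant_set (G : defMetricGroup) (X : defMetricSpace)
    (a : defAction G X) (A : ('I_(msdim X) -> M) -> Prop) :=
  forall g x, mspts G g -> mspts X x -> (A (a g x) <-> A x).

Definition invariant_fun (G : defMetricGroup) (X : defMetricSpace)
    (a : defAction G X) (f : ('I_(msdim X) -> M) -> M) :=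
  forall g x, mspts G g -> mspts X x -> f (a g x) = f x.

End Definable.

Arguments msdim {R} _.
Arguments mspts {R} _ _.
Arguments msdist {R} _ _ _.
Arguments gspace {R} _.
Arguments gmul {R} _ _ _.
Arguments ginv {R} _ _.
Arguments gone {R} _ _.

(* Main.v *)
Require Import Defs.
From mathcomp Require Import all_boot zify.
From Stdlib Require Import FunctionalExtensionality PropExtensionality Classical ClassicalEpsilon.
Set Implicit Arguments.
Unset Strict Implicit.
Unset Printing Implicit Defensive.

Ltac idx := (repeat (case: ifP => ?)); lia.

Section Lib.
Variable R : dclomStructure.
Local Notation M := (carrier R).

Lemma defn_ext n (P Q : ('I_n -> M) -> Prop) :
  defn P -> (forall x, P x <-> Q x) -> defn Q.
Proof.
move=> H E; have -> : Q = P; last exact: H.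
apply: functional_extensionality => x; apply: propositional_extensionality; split; apply E.
Qed.

Lemma cast_defn m m' (Q : ('I_m -> M) -> Prop) (e : m = m') :
  defn Q -> defn (fun x : 'I_m' -> M => Q (fun i => x (cast_ord e i))).
Proof.
case: m' / e => H; apply: (defn_ext H) => x.
have -> : (fun i => x (cast_ord erefl i)) = x by apply: functional_extensionality => i; rewrite cast_ord_id.
by [].
Qed.

Definition ext n (x : 'I_n -> M) (j : nat) : M :=
  match insub j with Some i => x i | None => zero R end.

Lemma ext_lt n (x : 'I_n -> M) j (H : j < n) : ext x j = x (Ordinal H).
Proof. rewrite /ext insubT /=; congr x; exact: val_inj. Qed.

Lemma ext_val n (x : 'I_n -> M) (i : 'I_n) : ext x i = x i.
Proof. rewrite (ext_lt x (ltn_ord i)); congr x; exact: val_inj. Qed.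

Definition DefE n (P : (nat -> M) -> Prop) :=
  (forall e e', (forall j, j < n -> e j = e' j) -> P e -> P e') /\
  defn (fun x : 'I_n -> M => P (ext x)).

Lemma DefE_ext n P Q : DefE n P -> (forall e, P e <-> Q e) -> DefE n Q.
Proof.
move=> H E; have -> : Q = P; last exact: H.
apply: functional_extensionality => x; apply: propositional_extensionality; split; apply E.
Qed.

Lemma DefE_dep n P e e' : DefE n P -> (forall j, j < n -> e j = e' j) -> P e <-> P e'.
Proof. move=> [H _] E; split; apply: H => // j Hj; by rewrite E. Qed.

Lemma DefE_S n P : DefE n P -> DefE n.+1 P.
Proof.
move=> [D H]; split.
  move=> e e' E; apply: D => j Hj; apply: E; lia.
have := cast_defn (addn1 n) (defn_prodr H).
move/defn_ext; apply => x; apply: (DefE_dep (conj D H)) => j Hj.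
have Hj' : j < n.+1 by lia.
rewrite (ext_lt _ Hj) (ext_lt _ Hj') /tfst; congr x; exact: val_inj.
Qed.

Lemma DefE_shift n P : DefE n P -> DefE n.+1 (fun e => P (fun j => e j.+1)).
Proof.
move=> [D H]; split.
  move=> e e' E; apply: D => j Hj; apply: E; lia.
have := cast_defn (add1n n) (defn_prodl H).
move/defn_ext; apply => x; apply: (DefE_dep (conj D H)) => j Hj.
have Hj' : j.+1 < n.+1 by lia.
rewrite (ext_lt _ Hj) (ext_lt _ Hj') /tsnd; congr x; exact: val_inj.
Qed.

Lemma DefE_diag n i j : i < n -> j < n -> DefE n (fun e => e i = e j).
Proof.
move=> Hi Hj; split.
  by move=> e e' E; rewrite !E.
apply: (defn_ext (defn_diag R (Ordinal Hi) (Ordinal Hj))) => x.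
by rewrite (ext_lt _ Hi) (ext_lt _ Hj).
Qed.

Definition upd (e : nat -> M) n a := fun j => if j == n then a else e j.

Lemma DefE_proj n P : DefE n.+1 P -> DefE n (fun e => exists a, P (upd e n a)).
Proof.
move=> [D H]; split.
  move=> e e' E [a Ha]; exists a; apply: D Ha => j Hj; rewrite /upd.
  case: eqP => // /eqP ?; apply: E; lia.
have := defn_proj (cast_defn (esym (addn1 n)) H).
move/defn_ext; apply => x.
have K : forall a j, j < n.+1 ->
   ext (fun i => tcat x (tconst1 a) (cast_ord (esym (addn1 n)) i)) j = upd (ext x) n a j.
  move=> a j Hj; rewrite (ext_lt _ Hj) /tcat /upd.
  case: splitP => k /= Hk.
  + have -> : (j == n) = false by move: (ltn_ord k); lia.
    by rewrite Hk ext_val.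
  + have -> : (j == n) = true by move: (ltn_ord k); lia.
    by [].
split => -[a Ha]; exists a; move: Ha; apply: D => j Hj; by rewrite K.
Qed.

Lemma DefE_const c : DefE 1 (fun e => e 0 = c).
Proof.
split; first by move=> e e' E; rewrite E.
apply: (defn_ext (defn_const c)) => x.
by rewrite (ext_lt _ (isT : 0 < 1)); have -> : Ordinal (isT : 0 < 1) = ord0 by exact: val_inj.
Qed.

Lemma DefE_lt : DefE 2 (fun e => lt (e 0) (e 1)).
Proof.
split; first by move=> e e' E; rewrite !E.
apply: (defn_ext (defn_lt R)) => x.
rewrite (ext_lt _ (isT : 0 < 2)) (ext_lt _ (isT : 1 < 2)).
by split; congr lt; congr x; apply: val_inj; rewrite /= inordK.
Qed.

Lemma DefE_and n P Q : DefE n P -> DefE n Q -> DefE n (fun e => P e /\ Q e).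
Proof.
move=> [D1 H1] [D2 H2]; split.
  by move=> e e' E [? ?]; split; [apply: D1 E _| apply: D2 E _].
have := defn_compl (defn_union (defn_compl H1) (defn_compl H2)).
move/defn_ext; apply => x; tauto.
Qed.

Lemma DefE_or n P Q : DefE n P -> DefE n Q -> DefE n (fun e => P e \/ Q e).
Proof.
move=> [D1 H1] [D2 H2]; split.
  by move=> e e' E [?|?]; [left; apply: D1 E _| right; apply: D2 E _].
exact: defn_union.
Qed.

Lemma DefE_not n P : DefE n P -> DefE n (fun e => ~ P e).
Proof.
move=> [D H]; split; last exact: defn_compl.
move=> e e' E HP HP'; apply: HP; apply: D HP' => j Hj; by rewrite E.
Qed.

Lemma DefE_True n : DefE n (fun _ => True).
Proof. by split => //; apply: defn_full. Qed.

Lemma DefE_blk0 m (B : ('I_m -> M) -> Prop) :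
  defn B -> DefE m (fun e => B (fun i : 'I_m => e i)).
Proof.
move=> H; split.
  move=> e e' E; have -> : (fun i : 'I_m => e' i) = (fun i : 'I_m => e i) by
    apply: functional_extensionality => i; rewrite E.
  by [].
apply: (defn_ext H) => x.
have -> : (fun i : 'I_m => ext x i) = x by apply: functional_extensionality => i; rewrite ext_val.
by [].
Qed.


Lemma DefE_mono n m P : n <= m -> DefE n P -> DefE m P.
Proof.
move=> /subnK <-; elim: (m - n) => [|d IH] H //=.
by rewrite addSn; apply: DefE_S; apply: IH.
Qed.

Lemma DefE_shiftk k n P : DefE n P -> DefE (k + n) (fun e => P (fun j => e (k + j))).
Proof.
move=> H; elim: k => [|k IH] /=.
  by apply: (DefE_ext H) => e.
rewrite addSn; apply: (DefE_ext (DefE_shift IH)) => e.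
by rewrite /=.
Qed.

Lemma DefE_all n k (P : nat -> (nat -> M) -> Prop) :
  (forall i, i < k -> DefE n (P i)) -> DefE n (fun e => forall i, i < k -> P i e).
Proof.
elim: k => [|k IH] H.
  by apply: (DefE_ext (DefE_True n)) => e; split => // _ i.
have H1 := IH (fun i Hi => H i (ltnW Hi)).
apply: (DefE_ext (DefE_and H1 (H k (ltnSn k)))) => e; split.
  move=> [A B] i Hi; case: (ltngtP i k) => [Hik||->] //; [exact: A|lia].
move=> A; split; last exact: A.
by move=> i Hi; apply: A; lia.
Qed.

Definition app (k : nat) (u v : nat -> M) : nat -> M :=
  fun j => if j < k then u j else v (j - k).

Definition blk (o m : nat) (e : nat -> M) : 'I_m -> M := fun i => e (o + i).
Arguments blk o m e : clear implicits.

Lemma app_lo k u v j : j < k -> app k u v j = u j.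
Proof. by rewrite /app => ->. Qed.
Lemma app_hi k u v j : app k u v (k + j) = v j.
Proof. rewrite /app ifF; [by rewrite addKn | lia]. Qed.
Lemma app_hi0 k u v : app k u v k = v 0.
Proof. by have := @app_hi k u v 0; rewrite addn0. Qed.
Lemma blk_app_lo o m k u v : o + m <= k -> blk o m (app k u v) = blk o m u.
Proof.
move=> H; apply: functional_extensionality => i; rewrite /blk app_lo //.
have := ltn_ord i; lia.
Qed.
Lemma blk_app_hi o m k u v : blk (k + o) m (app k u v) = blk o m v.
Proof. by apply: functional_extensionality => i; rewrite /blk -addnA app_hi. Qed.
Lemma blk_app_hi0 m k u v : blk k m (app k u v) = blk 0 m v.
Proof. by have := @blk_app_hi 0 m k u v; rewrite addn0. Qed.

Lemma DefE_ex n k P : DefE (n + k) P -> DefE n (fun e => exists y, P (app n e y)).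
Proof.
elim: k P => [|k IH] P.
  rewrite addn0 => H; apply: (DefE_ext H) => e; split.
    by move=> HP; exists e; move: HP; apply: (proj1 H) => j Hj; rewrite app_lo.
  by move=> [y]; apply: (proj1 H) => j Hj; rewrite app_lo.
rewrite addnS => H; have := IH _ (DefE_proj H).
move/DefE_ext; apply => e; split.
  move=> [y [a Ha]]; exists (fun j => if j == k then a else y j); move: Ha.
  have -> // : upd (app n e y) (n + k) a = app n e (fun j => if j == k then a else y j).
  apply: functional_extensionality => j; rewrite /upd /app.
  case: (ltnP j n) => Hj.
    by rewrite ifF //; lia.
  case: eqP => [->|]; first by rewrite addKn eqxx.
  by move=> /eqP Hne; rewrite ifF //; lia.
move=> [y Hy]; exists y, (y k).
have -> // : upd (app n e y) (n + k) (y k) = app n e y.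
apply: functional_extensionality => j; rewrite /upd /app.
case: eqP => [->|//]; by rewrite ifF ?addKn //; lia.
Qed.

Lemma DefE_pull k n P (s : nat -> nat) : DefE k P -> (forall i, i < k -> s i < n) ->
  DefE n (fun e => P (fun i => e (s i))).
Proof.
move=> H Hs.
have H0 := DefE_shiftk n H.
have H1 : DefE (n + k) (fun e => forall i, i < k -> e (n + i) = e (s i)).
  apply: DefE_all => i Hi; apply: DefE_diag; [lia| have := Hs i Hi; lia].
have := DefE_ex (DefE_and H1 H0).
move/DefE_ext; apply => e; split.
  move=> [y [A B]]; move: B; apply: (proj1 H) => j Hj.
  by rewrite A // app_lo ?Hs.
move=> HP; exists (fun i => e (s i)); split.
  by move=> i Hi; rewrite app_hi app_lo ?Hs.
move: HP; apply: (proj1 H) => j Hj; by rewrite app_hi.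
Qed.

Lemma DefE_tup m n (B : ('I_m -> M) -> Prop) (s : nat -> nat) :
  defn B -> (forall i, i < m -> s i < n) -> DefE n (fun e => B (fun i : 'I_m => e (s i))).
Proof. move=> H Hs; exact: (DefE_pull (DefE_blk0 H) Hs). Qed.

Lemma DefE_eqc n j c : j < n -> DefE n (fun e => e j = c).
Proof. move=> Hj; exact: (DefE_pull (s := fun _ => j) (DefE_const c)). Qed.

Lemma DefE_lt2 n i j : i < n -> j < n -> DefE n (fun e => lt (e i) (e j)).
Proof.
move=> Hi Hj.
have := DefE_pull (s := fun k => if k == 0 then i else j) DefE_lt.
by apply => -[|[|]].
Qed.

Lemma DefE_blkc n o k (c : 'I_k -> M) : o + k <= n -> DefE n (fun e => blk o k e = c).
Proof.
move=> H.
have H' : DefE n (fun e => forall i, i < k -> e (o + i) = ext c i).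
  by apply: DefE_all => i Hi; apply: DefE_eqc; lia.
apply: (DefE_ext H') => e; split.
  move=> A; apply: functional_extensionality => i; by rewrite /blk A // ext_val.
by move=> <- i Hi; rewrite (ext_lt _ Hi).
Qed.

Lemma DefE_param n k P (c : 'I_k -> M) : DefE (n + k) P -> DefE n (fun e => P (app n e (ext c))).
Proof.
move=> H; have := DefE_ex (DefE_and (DefE_blkc c (leqnn (n + k))) H).
move/DefE_ext; apply => e; split.
  move=> [y [A B]]; move: B; apply: (proj1 H) => j Hj; rewrite /app.
  case: ltnP => // Hjn; have Hk : j - n < k by lia.
  have := f_equal (fun f => f (Ordinal Hk)) A; rewrite /blk /= ext_lt => <-.
  by rewrite /app ifF ?addKn //; lia.
move=> HP; exists (ext c); split => //.
by rewrite blk_app_hi0; apply: functional_extensionality => i; rewrite /blk ext_val.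
Qed.



Definition sel4 a b c o1 o2 o3 o4 j := if j < a then o1 + j else if j < a + b then o2 + (j - a)
            else if j < a + b + c then o3 + (j - (a + b)) else o4.

Lemma DefE_reloc a b c N o1 o2 o3 o4
  (Q : ('I_a -> M) -> ('I_b -> M) -> ('I_c -> M) -> M -> Prop) :
  DefE (a + b + c + 1) (fun e => Q (blk 0 a e) (blk a b e) (blk (a + b) c e) (e (a + b + c))) ->
  o1 + a <= N -> o2 + b <= N -> o3 + c <= N -> o4 < N ->
  DefE N (fun e => Q (blk o1 a e) (blk o2 b e) (blk o3 c e) (e o4)).
Proof.
move=> H H1 H2 H3 H4.
have : forall i, i < a + b + c + 1 -> sel4 a b c o1 o2 o3 o4 i < N.
  by move=> i Hi; rewrite /sel4; idx.
move/(DefE_pull H).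
move/DefE_ext; apply => e.
have -> : blk 0 a (fun i => e (sel4 a b c o1 o2 o3 o4 i)) = blk o1 a e.
  apply: functional_extensionality => i; rewrite /blk; cbv beta; have := ltn_ord i; rewrite /sel4 => ?; congr e; idx.
have -> : blk a b (fun i => e (sel4 a b c o1 o2 o3 o4 i)) = blk o2 b e.
  apply: functional_extensionality => i; rewrite /blk; cbv beta; have := ltn_ord i; rewrite /sel4 => ?; congr e; idx.
have -> : blk (a + b) c (fun i => e (sel4 a b c o1 o2 o3 o4 i)) = blk o3 c e.
  apply: functional_extensionality => i; rewrite /blk; cbv beta; have := ltn_ord i; rewrite /sel4 => ?; congr e; idx.
have -> : sel4 a b c o1 o2 o3 o4 (a + b + c) = o4 by rewrite /sel4; idx.
by [].
Qed.

Lemma tsnd_const1 m (z : 'I_(m + 1) -> M) v :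
  tsnd z = tconst1 v <-> z (rshift m ord0) = v.
Proof.
split; first by move=> E; have := f_equal (fun f => f ord0) E.
move=> E; apply: functional_extensionality => i; rewrite /tsnd /tconst1.
by rewrite -E; congr z; apply: val_inj; rewrite /= (ord1 i).
Qed.

Lemma blk0_ext k (c : 'I_k -> M) : blk 0 k (ext c) = c.
Proof. by apply: functional_extensionality => i; rewrite /blk ext_val. Qed.

Lemma ex_blk k (Q : ('I_k -> M) -> Prop) :
  (exists y : nat -> M, Q (blk 0 k y)) <-> exists c, Q c.
Proof.
split; first by move=> [y H]; exists (blk 0 k y).
by move=> [c H]; exists (ext c); rewrite blk0_ext.
Qed.


Lemma DefE_set k (B : ('I_k -> M) -> Prop) N o : defn B -> o + k <= N ->
  DefE N (fun e => B (blk o k e)).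
Proof.
move=> H Hk; have := DefE_tup (s := fun j => o + j) (n := N) H.
by apply => i Hi; lia.
Qed.

Lemma DefE_dist (Y : defMetricSpace R) N o1 o2 r :
  o1 + msdim Y <= N -> o2 + msdim Y <= N -> r < N ->
  DefE N (fun e => mspts Y (blk o1 (msdim Y) e) /\ mspts Y (blk o2 (msdim Y) e) /\
     e r = msdist Y (blk o1 (msdim Y) e) (blk o2 (msdim Y) e)).
Proof.
move=> H1 H2 H3.
pose Q (x y : 'I_(msdim Y) -> M) (_ : 'I_0 -> M) r :=
  mspts Y x /\ mspts Y y /\ r = msdist Y x y.
have := @DefE_reloc _ _ 0 N o1 o2 0 r Q.
apply; [|lia..].
rewrite addn0.
have := @DefE_tup _ (msdim Y + msdim Y + 1) _ (fun j => j) (msdist_def Y) (fun i Hi => Hi).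
move/DefE_ext; apply => e.
rewrite tsnd_const1 /= addn0 /Q.
change (tfst (tfst (fun i : 'I_(msdim Y + msdim Y + 1) => e i))) with (blk 0 (msdim Y) e).
change (tsnd (tfst (fun i : 'I_(msdim Y + msdim Y + 1) => e i))) with (blk (msdim Y) (msdim Y) e).
tauto.
Qed.

End Lib.
Ltac appS := repeat first [ rewrite blk_app_hi0 | rewrite blk_app_hi | rewrite app_hi0 | rewrite app_hi
   | (rewrite blk_app_lo; [|lia]) | (rewrite app_lo; [|lia]) | rewrite blk0_ext ].
Ltac appSS := repeat first [ setoid_rewrite blk_app_hi0 | setoid_rewrite blk_app_hi | setoid_rewrite app_hi0 | setoid_rewrite app_hi
   | (setoid_rewrite blk_app_lo; [|lia]) | (setoid_rewrite app_lo; [|lia]) | setoid_rewrite blk0_ext ].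


Arguments blk {R} o m e.

Section Ord.
Variable R : dclomStructure.
Local Notation M := (carrier R).
Local Notation lt := (@lt R).
Local Notation "x + y" := (add x y).

Lemma lt_asym (x y : M) : lt x y -> ~ lt y x.
Proof. move=> H1 H2; exact: (lt_irr (lt_trans H1 H2)). Qed.

Lemma lt_le_trans (x y z : M) : lt x y -> ~ lt z y -> lt x z.
Proof.
move=> H1 H2; case: (lt_total y z) => [H|[<-|H]] //; first exact: lt_trans H1 H.
Qed.

Lemma le_lt_trans (x y z : M) : ~ lt y x -> lt y z -> lt x z.
Proof.
move=> H1 H2; case: (lt_total x y) => [H|[->|H]] //; first exact: lt_trans H H2.
Qed.

Lemma le_trans (x y z : M) : ~ lt y x -> ~ lt z y -> ~ lt z x.
Proof. move=> H1 H2 H3; apply: H2; exact: lt_le_trans H3 H1. Qed.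

Lemma not_lt_eq (x y : M) : ~ lt x y -> ~ lt y x -> x = y.
Proof. by move=> H1 H2; case: (lt_total x y) => [|[|]]. Qed.

Lemma add_lt2 (a b c d : M) : lt a b -> lt c d -> lt (a + c) (b + d).
Proof. move=> H1 H2; apply: (lt_trans (lt_addr c H1)); exact: lt_addl. Qed.

Lemma add_le2 (a b c d : M) : ~ lt b a -> ~ lt d c -> ~ lt (b + d) (a + c).
Proof.
move=> H1 H2 H.
case: (lt_total a b) => [Hab|[Eab|Hab]]; last by [].
- case: (lt_total c d) => [Hcd|[Ecd|Hcd]]; last by [].
  + exact: lt_asym (add_lt2 Hab Hcd) H.
  + by subst; exact: lt_asym (lt_addr d Hab) H.
- subst; case: (lt_total c d) => [Hcd|[Ecd|Hcd]]; last by [].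
  + exact: lt_asym (lt_addl b Hcd) H.
  + by subst; exact: lt_irr H.
Qed.

Lemma add_lt_le (a b c d : M) : lt a b -> ~ lt d c -> lt (a + c) (b + d).
Proof.
move=> H1 H2; case: (lt_total c d) => [H|[<-|H]] //.
- exact: add_lt2.
- exact: lt_addr.
Qed.

Lemma eps_sub (v b : M) : lt v b -> lt (zero R) (b + neg v) /\ (b + neg v) + v = b.
Proof.
move=> H; split.
  by have := lt_addr (neg v) H; rewrite addrN.
by rewrite -addA addNr addr0.
Qed.

Lemma eps_split (h e : M) : lt h e -> lt (zero R) (neg h + e) /\ h + (neg h + e) = e.
Proof.
move=> H; split.
  by have := lt_addl (neg h) H; rewrite addNr.
by rewrite addA addrN add0r.
Qed.

Lemma min_pos (a b : M) : lt (zero R) a -> lt (zero R) b ->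
  exists c, lt (zero R) c /\ ~ lt a c /\ ~ lt b c.
Proof.
move=> Ha Hb; case: (lt_total a b) => [H|[<-|H]].
- exists a; split => //; split; [exact: lt_irr| exact: lt_asym].
- exists a; split => //; split; exact: lt_irr.
- exists b; split => //; split; [exact: lt_asym| exact: lt_irr].
Qed.

Lemma pos_ex : exists c : M, lt (zero R) c.
Proof. by have [y [z [_ H]]] := lt_noendpoints (zero R); exists z. Qed.

Lemma dense_ex (a b : M) : lt a b -> exists c, lt a c /\ lt c b.
Proof. exact: lt_dense. Qed.

Variable Y : defMetricSpace R.
Local Notation d := (msdist Y).
Local Notation pts := (mspts Y).

Lemma d_self x : pts x -> d x x = zero R.
Proof. by move=> H; apply/(msdist_eq0 H H). Qed.

Lemma d_tri_lt x y z e1 e2 : pts x -> pts y -> pts z ->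
  lt (d x y) e1 -> lt (d y z) e2 -> lt (d x z) (e1 + e2).
Proof.
move=> Hx Hy Hz H1 H2.
exact: le_lt_trans (msdist_tri Hx Hy Hz) (add_lt2 H1 H2).
Qed.

Lemma d_tri_lt_le x y z e1 e2 : pts x -> pts y -> pts z ->
  lt (d x y) e1 -> ~ lt e2 (d y z) -> lt (d x z) (e1 + e2).
Proof.
move=> Hx Hy Hz H1 H2.
exact: le_lt_trans (msdist_tri Hx Hy Hz) (add_lt_le H1 H2).
Qed.

End Ord.


Section Lib2.
Variable R : dclomStructure.
Local Notation M := (carrier R).

Lemma ex_s (Q : M -> Prop) : (exists y : nat -> M, Q (y 0)) <-> exists s, Q s.
Proof. split; [move=> [y H]; by exists (y 0)| move=> [s H]; by exists (fun _ => s)]. Qed.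

Lemma ex_blk2 k1 k2 (Q : ('I_k1 -> M) -> ('I_k2 -> M) -> Prop) :
  (exists y : nat -> M, Q (blk 0 k1 y) (blk k1 k2 y)) <-> exists a b, Q a b.
Proof.
split; first by move=> [y H]; exists (blk 0 k1 y), (blk k1 k2 y).
move=> [a [b H]]; exists (app k1 (ext a) (ext b)).
rewrite blk_app_lo // blk_app_hi0 !blk0_ext //.
Qed.

Lemma ex_blk3 k1 k2 (Q : ('I_k1 -> M) -> ('I_k2 -> M) -> M -> Prop) :
  (exists y : nat -> M, Q (blk 0 k1 y) (blk k1 k2 y) (y (k1 + k2))) <-> exists a b s, Q a b s.
Proof.
split; first by move=> [y H]; exists (blk 0 k1 y), (blk k1 k2 y), (y (k1 + k2)).
move=> [a [b [s H]]]; exists (app (k1 + k2) (app k1 (ext a) (ext b)) (fun _ => s)).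
rewrite app_hi0 (blk_app_lo _ _ (_ : 0 + k1 <= k1 + k2)); last by lia.
rewrite (blk_app_lo _ _ (_ : k1 + k2 <= k1 + k2)) //.
rewrite blk_app_lo // blk_app_hi0 !blk0_ext //.
Qed.

Lemma ex_blks k (Q : ('I_k -> M) -> M -> Prop) :
  (exists y : nat -> M, Q (blk 0 k y) (y k)) <-> exists a s, Q a s.
Proof.
split; first by move=> [y H]; exists (blk 0 k y), (y k).
move=> [a [s H]]; exists (app k (ext a) (fun _ => s)).
rewrite app_hi0 blk_app_lo // blk0_ext //.
Qed.

Lemma ext0 (z : 'I_1 -> M) : ext z 0 = z ord0.
Proof. by rewrite (ext_lt _ (isT : 0 < 1)); congr z; apply: val_inj. Qed.

Lemma blk0_extS m k (z : 'I_(m + k) -> M) : blk 0 m (ext z) = tfst z.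
Proof.
apply: functional_extensionality => i; rewrite /blk /tfst -(ext_val z (lshift k i)) //.
Qed.

Lemma blk_extS m k (z : 'I_(m + k) -> M) : blk m k (ext z) = tsnd z.
Proof.
apply: functional_extensionality => i; rewrite /blk /tsnd -(ext_val z (rshift m i)) //.
Qed.

Lemma ext_last m (z : 'I_(m + 1) -> M) : ext z m = z (rshift m ord0).
Proof. rewrite -(ext_val z (rshift m ord0)) /= addn0 //. Qed.

Lemma DefE_deffun N (D : ('I_N -> M) -> Prop) (F : ('I_N -> M) -> M) :
  DefE (N + 1) (fun e => D (blk 0 N e) /\ e N = F (blk 0 N e)) -> def_fun D F.
Proof.
move=> [_ H]; rewrite /def_fun /def_map.
apply: (defn_ext H) => z.
by rewrite tsnd_const1 blk0_extS ext_last.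
Qed.

Lemma DefE_ltc N j (c : M) : j < N -> DefE N (fun e => lt (e j) c).
Proof.
move=> Hj; have := DefE_param (tconst1 c) (@DefE_lt2 _ (N + 1) j N ltac:(lia) ltac:(lia)).
move/DefE_ext; apply => e.
rewrite app_hi0 app_lo //.
have -> : ext (tconst1 c) 0 = c by rewrite ext0.
by [].
Qed.

Lemma DefE_clt N j (c : M) : j < N -> DefE N (fun e => lt c (e j)).
Proof.
move=> Hj; have := DefE_param (tconst1 c) (@DefE_lt2 _ (N + 1) N j ltac:(lia) ltac:(lia)).
move/DefE_ext; apply => e.
rewrite app_hi0 app_lo //.
have -> : ext (tconst1 c) 0 = c by rewrite ext0.
by [].
Qed.

End Lib2.

Section Prob.
Variable R : dclomStructure.
Local Notation M := (carrier R).
Variables (G : defMetricGroup R) (X : defMetricSpace R) (ac : defAction G X)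
  (A : ('I_(msdim X) -> M) -> Prop).
Local Notation p := (msdim (gspace G)).
Local Notation n := (msdim X).
Local Notation ptsG := (mspts (gspace G)).
Local Notation ptsX := (mspts X).
Local Notation dG := (msdist (gspace G)).
Local Notation dX := (msdist X).

Lemma DefE_act N og ox oy : og + p <= N -> ox + n <= N -> oy + n <= N -> 0 < N ->
  DefE N (fun e => ptsG (blk og p e) /\ ptsX (blk ox n e) /\
     blk oy n e = ac (blk og p e) (blk ox n e)).
Proof.
move=> H1 H2 H3 H4.
pose Q (g : 'I_p -> M) (x y : 'I_n -> M) (_ : M) := ptsG g /\ ptsX x /\ y = ac g x.
have := @DefE_reloc _ _ _ _ N og ox oy 0 Q.
apply; [|lia..].
apply: (@DefE_mono _ (p + n + n)); first lia.
have := @DefE_tup _ (p + n + n) (p + n + n) _ (fun j => j) (act_def ac) (fun i Hi => Hi).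
move/DefE_ext; apply => e.
rewrite /Q.
change (tfst (tfst (fun i : 'I_(p + n + n) => e i))) with (blk 0 p e).
change (tsnd (tfst (fun i : 'I_(p + n + n) => e i))) with (blk p n e).
change (tsnd (fun i : 'I_(p + n + n) => e i)) with (blk (p + n) n e).
tauto.
Qed.

Definition Hg g x a s := ptsG g /\ ptsX x /\ ptsX a /\ s = dX (ac g x) a.

Lemma DefE_Hg0 : DefE (p + n + n + 1)
  (fun e => Hg (blk 0 p e) (blk p n e) (blk (p + n) n e) (e (p + n + n))).
Proof.
have H1 := DefE_and (@DefE_act (p + n + n + 1 + n) 0 p (p + n + n + 1) ltac:(lia) ltac:(lia) ltac:(lia) ltac:(lia))
                    (@DefE_dist _ X (p + n + n + 1 + n) (p + n + n + 1) (p + n) (p + n + n) ltac:(lia) ltac:(lia) ltac:(lia)).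
have := DefE_ex H1.
move/DefE_ext; apply => e; rewrite /Hg; split.
  move=> [y]; appS; move=> [[A1 [A2 A3]] [B1 [B2 B3]]].
  by rewrite B3 A3.
move=> [A1 [A2 [A3 A4]]]; exists (ext (ac (blk 0 p e) (blk p n e))); appS.
split; first by [].
split; last by [].
apply: act_in => //.
Qed.


Lemma DefE_Hg N og ox oa os : og + p <= N -> ox + n <= N -> oa + n <= N -> os < N ->
  DefE N (fun e => Hg (blk og p e) (blk ox n e) (blk oa n e) (e os)).
Proof. move=> H1 H2 H3 H4; exact: (@DefE_reloc _ p n n N og ox oa os Hg DefE_Hg0). Qed.

Definition S x s := exists g a, ptsG g /\ A a /\ s = dX (ac g x) a.

Lemma S_defn x : defn A -> (forall a, A a -> ptsX a) -> ptsX x ->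
  defn (fun z : 'I_1 -> M => S x (z ord0)).
Proof.
move=> HA HAX Hx.
have H1 := DefE_and (@DefE_Hg (1 + n + (p + n)) (1 + n) 1 (1 + n + p) 0 ltac:(lia) ltac:(lia) ltac:(lia) ltac:(lia))
                    (@DefE_set _ _ _ (1 + n + (p + n)) (1 + n + p) HA ltac:(lia)).
have := DefE_param x (DefE_ex H1).
move=> [_ H]; apply: (defn_ext H) => z.
rewrite /S /Hg; split.
  move=> [y]; appS; rewrite ext0; move=> [[B1 [B2 [B3 B4]]] B5]; by exists (blk 0 p y), (blk p n y).
move=> [g [a [B1 [B2 B3]]]]; exists (app p (ext g) (ext a)); appS; rewrite ext0.
by split; [split; [|split; [|split]]|]; auto.
Qed.


Definition LBf x b := ~ exists g a s, Hg g x a s /\ A a /\ lt s b.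

Lemma DefE_LBf N ox ob : defn A -> ox + n <= N -> ob < N ->
  DefE N (fun e => LBf (blk ox n e) (e ob)).
Proof.
move=> HA H1 H2.
have H := DefE_and (@DefE_Hg (N + (p + n + 1)) N ox (N + p) (N + (p + n)) ltac:(lia) ltac:(lia) ltac:(lia) ltac:(lia))
          (DefE_and (@DefE_set _ _ _ (N + (p + n + 1)) (N + p) HA ltac:(lia))
                    (@DefE_lt2 _ (N + (p + n + 1)) (N + (p + n)) ob ltac:(lia) ltac:(lia))).
have := DefE_not (DefE_ex H).
move/DefE_ext; apply => e; rewrite /LBf; split => HN [].
  move=> g [a [s [B1 [B2 B3]]]]; apply: HN.
  exists (app (p + n) (app p (ext g) (ext a)) (fun _ => s)); appS; by auto.
move=> y; appS; move=> [B1 [B2 B3]]; apply: HN.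
by exists (blk 0 p y), (blk p n y), (y (p + n)).
Qed.

Definition Fform x r := ptsX x /\ LBf x r /\ ~ exists b, LBf x b /\ lt r b.

Lemma DefE_Fform : defn A -> DefE (n + 1) (fun e => Fform (blk 0 n e) (e n)).
Proof.
move=> HA.
have H1 := DefE_and (@DefE_LBf (n + 1 + 1) 0 (n + 1) HA ltac:(lia) ltac:(lia))
                    (@DefE_lt2 _ (n + 1 + 1) n (n + 1) ltac:(lia) ltac:(lia)).
have H := DefE_and (@DefE_set _ _ _ (n + 1) 0 (mspts_def X) ltac:(lia))
          (DefE_and (@DefE_LBf (n + 1) 0 n HA ltac:(lia) ltac:(lia)) (DefE_not (DefE_ex H1))).
apply: (DefE_ext H) => e; rewrite /Fform.
split => -[B1 [B2 B3]]; split => //; split => // HN; apply: B3.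
  move: HN => [b [C1 C2]]; exists (fun _ => b); by appS.
move: HN => [y]; appS => -[C1 C2]; by exists (y 0).
Qed.

Lemma reloc_tg (Phi : M -> ('I_p -> M) -> Prop) N ot og :
  DefE (1 + p) (fun e => Phi (e 0) (blk 1 p e)) -> ot < N -> og + p <= N ->
  DefE N (fun e => Phi (e ot) (blk og p e)).
Proof.
move=> H H1 H2.
have : forall i, i < 1 + p -> (if i < 1 then ot else og + (i - 1)) < N.
  by move=> i Hi; idx.
move/(DefE_pull H)/DefE_ext; apply => e.
have -> : blk 1 p (fun i => e (if i < 1 then ot else og + (i - 1))) = blk og p e.
  apply: functional_extensionality => i; rewrite /blk; cbv beta; have := ltn_ord i => ?.
  congr e; idx.
by [].
Qed.

Definition Cl (Phi : M -> ('I_p -> M) -> Prop) t g :=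
  ptsG g /\ forall d, lt (zero R) d -> exists g', ptsG g' /\ lt (dG g g') d /\ Phi t g'.

Lemma DefE_Cl Phi : DefE (1 + p) (fun e => Phi (e 0) (blk 1 p e)) ->
  DefE (1 + p) (fun e => Cl Phi (e 0) (blk 1 p e)).
Proof.
move=> HP.
have H1 := DefE_and (@DefE_dist _ (gspace G) (1 + p + 1 + (p + 1)) 1 (1 + p + 1) (1 + p + 1 + p) ltac:(lia) ltac:(lia) ltac:(lia))
   (DefE_and (@DefE_lt2 _ (1 + p + 1 + (p + 1)) (1 + p + 1 + p) (1 + p) ltac:(lia) ltac:(lia))
             (@reloc_tg Phi (1 + p + 1 + (p + 1)) 0 (1 + p + 1) HP ltac:(lia) ltac:(lia))).
have H2 := DefE_and (@DefE_clt _ (1 + p + 1) (1 + p) (zero R) ltac:(lia)) (DefE_not (DefE_ex H1)).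
have H := DefE_and (@DefE_set _ _ _ (1 + p) 1 (mspts_def (gspace G)) ltac:(lia)) (DefE_not (DefE_ex H2)).
apply: (DefE_ext H) => e; rewrite /Cl; split.
  move=> [B1 B2]; split => // d Hd.
  apply: NNPP => HN; apply: B2; exists (fun _ => d); appS; split => // -[y]; appS.
  move=> [[C1 [C2 C3]] [C4 C5]]; apply: HN; exists (blk 0 p y); split => //; split => //.
  by rewrite -C3.
move=> [B1 B2]; split => // -[y]; appS => -[C1 C2]; apply: C2.
have [g' [D1 [D2 D3]]] := B2 _ C1.
exists (app p (ext g') (fun _ => dG (blk 1 p e) g')); appS; by auto.
Qed.


Definition Phi1 x0 t g := ptsG g /\ exists a s, Hg g x0 a s /\ A a /\ lt s t.

Lemma DefE_Phi1 x0 : defn A -> DefE (1 + p) (fun e => Phi1 x0 (e 0) (blk 1 p e)).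
Proof.
move=> HA.
pose K := 1 + p + n.
have H1 := DefE_and (@DefE_Hg (K + (n + 1)) 1 (1 + p) K (K + n) ltac:(lia) ltac:(lia) ltac:(lia) ltac:(lia))
          (DefE_and (@DefE_set _ _ _ (K + (n + 1)) K HA ltac:(lia))
                    (@DefE_lt2 _ (K + (n + 1)) (K + n) 0 ltac:(lia) ltac:(lia))).
have H := DefE_and (@DefE_set _ _ _ K 1 (mspts_def (gspace G)) ltac:(lia)) (DefE_ex H1).
have := DefE_param x0 H.
move/DefE_ext; apply => e; rewrite /Phi1 /K; split.
  move=> [B1 [y]]; move: B1; appS => B1 [C1 [C2 C3]]; split => //.
  by exists (blk 0 n y), (y n).
move=> [B1 [a [s [C1 [C2 C3]]]]]; appS; split => //.
exists (app n (ext a) (fun _ => s)); appS; by auto.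
Qed.

Definition Phi2 x0 a' t g := ptsG g /\ exists y a u s,
  (ptsX x0 /\ ptsX y /\ u = dX x0 y) /\ lt u t /\ Hg g y a s /\ A a /\ lt s a'.

Lemma DefE_Phi2 x0 a' : defn A -> DefE (1 + p) (fun e => Phi2 x0 a' (e 0) (blk 1 p e)).
Proof.
move=> HA.
pose K := 1 + p + n + 1.
have H1 := DefE_and (@DefE_dist _ X (K + (n + n + 1 + 1)) (1 + p) K (K + (n + n)) ltac:(lia) ltac:(lia) ltac:(lia))
  (DefE_and (@DefE_lt2 _ (K + (n + n + 1 + 1)) (K + (n + n)) 0 ltac:(lia) ltac:(lia))
  (DefE_and (@DefE_Hg (K + (n + n + 1 + 1)) 1 K (K + n) (K + (n + n + 1)) ltac:(lia) ltac:(lia) ltac:(lia) ltac:(lia))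
  (DefE_and (@DefE_set _ _ _ (K + (n + n + 1 + 1)) (K + n) HA ltac:(lia))
            (@DefE_lt2 _ (K + (n + n + 1 + 1)) (K + (n + n + 1)) (1 + p + n) ltac:(lia) ltac:(lia))))).
have H := DefE_and (@DefE_set _ _ _ K 1 (mspts_def (gspace G)) ltac:(lia)) (DefE_ex H1).
have := DefE_param x0 (DefE_param (tconst1 a') H).
move/DefE_ext; apply => e; rewrite /Phi2 /K; split.
  move=> [B1 [y]]; move: B1; appS; rewrite ext0 /tconst1 => B1 [C1 [C2 [C3 [C4 C5]]]]; split => //.
  by exists (blk 0 n y), (blk n n y), (y (n + n)), (y (n + n + 1)).
move=> [B1 [y [a [u [s [C1 [C2 [C3 [C4 C5]]]]]]]]]; appS; split => //.
exists (app (n + n) (app n (ext y) (ext a)) (fun j => if j == 0 then u else s)); appS.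
rewrite ext0 /tconst1 /=; by auto.
Qed.


Lemma tcat_l k m (x : 'I_k -> M) (y : 'I_m -> M) i : tcat x y (lshift m i) = x i.
Proof.
rewrite /tcat; case: splitP => j /= Hj; first by congr x; apply: val_inj.
by move: (ltn_ord i); lia.
Qed.

Lemma tsnd_tcat k m (x : 'I_k -> M) (y : 'I_m -> M) : tsnd (tcat x y) = y.
Proof.
apply: functional_extensionality => i; rewrite /tsnd /tcat; case: splitP => j /= Hj.
  by move: (ltn_ord j); lia.
by congr y; apply: val_inj => /=; lia.
Qed.

Lemma CL Phi : def_compact G -> DefE (1 + p) (fun e => Phi (e 0) (blk 1 p e)) ->
  (forall t, lt (zero R) t -> exists g, ptsG g /\ Phi t g) ->
  (forall u s g, ~ lt s u -> Phi u g -> Phi s g) ->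
  exists g0, ptsG g0 /\ forall t, lt (zero R) t -> forall d, lt (zero R) d ->
     exists g', ptsG g' /\ lt (dG g0 g') d /\ Phi t g'.
Proof.
move=> Hc HP Hne Hmono.
have HC := DefE_Cl HP.
pose T := fun t : 'I_1 -> M => lt (zero R) (t ord0).
pose C := fun z : 'I_(1 + p) -> M => Cl Phi (z (lshift p ord0)) (tsnd z).
have HT : defn T.
  apply: (defn_ext (@DefE_clt _ 1 0 (zero R) isT).2) => z; by rewrite ext0.
have HCd : defn C.
  apply: (defn_ext HC.2) => z; rewrite /C blk_extS.
  by rewrite -(ext_val z (lshift p ord0)).
have CT : forall t g, C (tcat t g) = Cl Phi (t ord0) g.
  by move=> t g; rewrite /C tcat_l tsnd_tcat.
have [c Hc0] := pos_ex R.
have := Hc 1 T C HT HCd (ex_intro _ (tconst1 c) Hc0).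
case.
- move=> t Tt; split.
    by move=> g; rewrite CT; case.
  move=> g Hg; rewrite CT => HnC.
  have [d [Hd Hd']] : exists d, lt (zero R) d /\ forall g', ptsG g' -> lt (dG g g') d -> ~ Phi (t ord0) g'.
    apply: NNPP => N1; apply: HnC; split => // d Hd; apply: NNPP => N2; apply: N1.
    exists d; split => // g' Hg' Hdg HPh; apply: N2; exists g'; by auto.
  have [h [Hh1 Hh2]] := lt_dense Hd.
  exists h; split => // y Hy Hgy; rewrite CT => -[_ Hcl].
  have [E1 E2] := eps_split Hh2.
  have [g' [Hg' [Hyg' HPg']]] := Hcl _ E1.
  apply: (Hd' g' Hg' _ HPg').
  rewrite -E2; exact: d_tri_lt Hg Hy Hg' Hgy Hyg'.
- move=> t Tt; have [g [Hg HPg]] := Hne _ Tt; exists g; rewrite CT; split => // d Hd.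
  by exists g; rewrite d_self.
- move=> s t Ts Tt; have [u [Hu [Hus Hut]]] := min_pos Ts Tt.
  exists (tconst1 u); split => // g; rewrite !CT => -[Hg Hcl]; split; split => // d Hd;
    have [g' [Hg' [Hgg' HPg']]] := Hcl d Hd; exists g'; do 2!split => //; exact: Hmono HPg'.
- move=> g0 Hg0; exists g0; split.
    by have := Hg0 _ Hc0; rewrite CT => -[].
  move=> t Ht d Hd; have := Hg0 (tconst1 t) Ht; rewrite CT => -[_ Hcl]; exact: Hcl.
Qed.


Lemma main_empty : ~ (exists a, A a) ->
  exists f : ('I_n -> M) -> M,
    def_fun ptsX f /\ continuous_on f /\ invariant_fun ac f /\
    (forall x, ptsX x -> (f x = zero R <-> A x)).
Proof.
move=> Hne; have [c Hc] := pos_ex R.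
exists (fun _ => c); split; last split; last split.
- apply: DefE_deffun.
  exact: DefE_and (@DefE_set _ _ _ (n + 1) 0 (mspts_def X) ltac:(lia)) (@DefE_eqc _ (n + 1) n c ltac:(lia)).
- move=> x Hx a b Ha Hb; exists c; split => // y Hy _; by split.
- by [].
- move=> x Hx; split => [E|HAx]; last by case: Hne; exists x.
  by move: Hc; rewrite E => /lt_irr.
Qed.

Section NE.
Hypothesis Hc : def_compact G.
Hypothesis HA : defn A.
Hypothesis Hcl : closed_in A.
Hypothesis Hinv : invariant_set ac A.
Hypothesis Hne : exists a, A a.

Let HAX : forall a, A a -> ptsX a := proj1 Hcl.

Definition IsInf x r := (forall s, S x s -> ~ lt s r) /\
  (forall b, (forall s, S x s -> ~ lt s b) -> ~ lt r b).

Definition f x := epsilon (inhabits (zero R)) (IsInf x).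

Lemma f_spec x : ptsX x -> IsInf x (f x).
Proof.
move=> Hx; apply: epsilon_spec.
have [a0 Ha0] := Hne.
apply: (def_inf (S_defn HA HAX Hx)).
  exists (dX (ac (gone G) x) a0), (gone G), a0; split; [exact: gone_in|by split].
exists (zero R) => s [g [a [Hg [Ha ->]]]].
apply: msdist_ge0; [apply: act_in => //| exact: HAX].
Qed.

Lemma f_lb x s : ptsX x -> S x s -> ~ lt s (f x).
Proof. by move=> Hx; apply: (proj1 (f_spec Hx)). Qed.

Lemma f_glb x b : ptsX x -> (forall s, S x s -> ~ lt s b) -> ~ lt (f x) b.
Proof. by move=> Hx; apply: (proj2 (f_spec Hx)). Qed.

Lemma f_approx x b : ptsX x -> lt (f x) b -> exists s, S x s /\ lt s b.
Proof.
move=> Hx H; apply: NNPP => N; apply: (f_glb Hx _ H) => s Hs Hsb; apply: N; by exists s.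
Qed.

Lemma f_ge0 x : ptsX x -> ~ lt (f x) (zero R).
Proof.
move=> Hx; apply: f_glb => // s [g [a [Hg [Ha ->]]]].
apply: msdist_ge0; [apply: act_in => //| exact: HAX].
Qed.

Lemma IsInf_unique x r r' : IsInf x r -> IsInf x r' -> r = r'.
Proof.
move=> [H1 H2] [H1' H2']; apply: not_lt_eq.
- by apply: H2.
- by apply: H2'.
Qed.

Lemma LB_iff x b : ptsX x -> (LBf x b <-> forall s, S x s -> ~ lt s b).
Proof.
move=> Hx; rewrite /LBf /S /Hg; split.
  move=> HN s [g [a [Hg [Ha ->]]]] Hlt; apply: HN.
  exists g, a, (dX (ac g x) a); split => //; split => //; split => //; split => //; exact: HAX.
move=> H [g [a [s [[Hg [_ [_ ->]]] [Ha Hlt]]]]].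
apply: (H _ _ Hlt); by exists g, a.
Qed.

Lemma f_def : def_fun ptsX f.
Proof.
apply: DefE_deffun; apply: (DefE_ext (DefE_Fform HA)) => e.
rewrite /Fform; split.
  move=> [Hx [H1 H2]]; split => //.
  apply: (IsInf_unique _ (f_spec Hx)); split.
    by apply/LB_iff.
  move=> b Hb Hlt; apply: H2; exists b; split => //; exact/LB_iff.
move=> [Hx ->]; split => //; split.
  by apply/LB_iff => //; apply: (proj1 (f_spec Hx)).
move=> [b [Hb Hlt]]; apply: (f_glb Hx _ Hlt); exact/LB_iff.
Qed.

Lemma S_inv g x : ptsG g -> ptsX x -> S (ac g x) = S x.
Proof.
move=> Hg Hx; apply: functional_extensionality => s; apply: propositional_extensionality.
rewrite /S; split.
  move=> [h [a [Hh [Ha ->]]]]; exists (gmul G h g), a; split; first exact: gmul_in.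
  by split => //; rewrite actM.
move=> [h [a [Hh [Ha ->]]]]; exists (gmul G h (ginv G g)), a.
have Hi := ginv_in Hg.
split; first exact: gmul_in.
split => //; rewrite actM //; last exact: gmul_in.
by rewrite -gmulA // gmulVg // gmulg1.
Qed.

Lemma f_inv : invariant_fun ac f.
Proof. move=> g x Hg Hx; by rewrite /f /IsInf S_inv. Qed.

Lemma f_zero x : ptsX x -> (f x = zero R <-> A x).
Proof.
move=> Hx; split; last first.
  move=> HAx; apply: not_lt_eq; first exact: f_ge0.
  apply: f_lb => //; exists (gone G), x; split; first exact: gone_in.
  by rewrite act1 // d_self.
move=> Hf0; apply: NNPP => HnA.
have [g0 [Hg0 Hcl0]] := @CL (Phi1 x) Hc (DefE_Phi1 x HA)
  ltac:(move=> t Ht; have [s [[g [a [Hg [Ha ->]]]] Hs]] := f_approx Hx (eq_ind_r (fun v => lt v t) Ht Hf0);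
        exists g; split => //; split => //; exists a, (dX (ac g x) a); split => //; split => //; split => //; split => //; exact: HAX)
  ltac:(move=> u s g Hsu [Hg [a [s' [H1 [H2 H3]]]]]; split => //; exists a, s'; split => //; split => //; exact: lt_le_trans H3 Hsu).
have Hg0x := act_in ac Hg0 Hx.
have HnA0 : ~ A (ac g0 x) by rewrite Hinv.
have [eps [Heps Hball]] := proj2 Hcl _ Hg0x HnA0.
have [h [Hh1 Hh2]] := lt_dense Heps.
have [E1 E2] := eps_split Hh2.
have [d [Hd Hcont]] := act_cont ac Hg0 Hx Hh1.
have [g' [Hg' [Hgg' [_ [a [s [[_ [_ [Ha' Hs]]] [Ha Hst]]]]]]]] := Hcl0 _ E1 _ Hd.
apply: (Hball a Ha' _ Ha).
rewrite -E2; apply: (d_tri_lt Hg0x (act_in ac Hg' Hx) Ha' _ (eq_ind _ (fun v => lt v _) Hst _ Hs)).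
by apply: Hcont => //; rewrite d_self.
Qed.


Lemma f_cont : continuous_on f.
Proof.
move=> x Hx a b Ha Hb.
have [s [[g [al [Hg [Hal Es]]]] Hsb]] := f_approx Hx Hb.
have [E1 E2] := eps_sub Hsb.
have [d1 [Hd1 Hc1]] := act_cont ac Hg Hx E1.
have [a' [Ha1 Ha2]] := lt_dense Ha.
have [d2 [Hd2 Hc2]] : exists d2, lt (zero R) d2 /\ forall y, ptsX y -> lt (dX x y) d2 ->
    forall s, S y s -> ~ lt s a'.
  apply: NNPP => N.
  have Hne2 : forall t, lt (zero R) t -> exists g, ptsG g /\ Phi2 x a' t g.
    move=> t Ht; apply: NNPP => N2; apply: N; exists t; split => // y Hy Hxy s' [g1 [a1 [Hg1 [Ha1' ->]]]] Hs'.
    apply: N2; exists g1; split => //; split => //.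
    exists y, a1, (dX x y), (dX (ac g1 y) a1); split; first by split.
    split => //; split => //; split => //; split => //; split => //; exact: HAX.
  have Hmono2 : forall u s g, ~ lt s u -> Phi2 x a' u g -> Phi2 x a' s g.
    move=> u s' g1 Hsu [Hg1 [y [a1 [u1 [s1 [C1 [C2 C3]]]]]]]; split => //.
    exists y, a1, u1, s1; split => //; split => //; exact: lt_le_trans C2 Hsu.
  have [g0 [Hg0 Hcl0]] := @CL (Phi2 x a') Hc (DefE_Phi2 x a' HA) Hne2 Hmono2.
  have Hg0x := act_in ac Hg0 Hx.
  have [E3 E4] := eps_sub Ha2.
  have [d [Hd Hcont]] := act_cont ac Hg0 Hx E3.
  have [g' [Hg' [Hgg' [_ [y [a1 [u [s1 [[_ [Hy Eu]] [Hu [[_ [_ [Ha1x Es1]]] [Ha1' Hs1]]]]]]]]]]]] := Hcl0 _ Hd _ Hd.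
  subst u s1.
  have Hy' := act_in ac Hg' Hy.
  have := d_tri_lt Hg0x Hy' Ha1x (Hcont _ _ Hg' Hy Hgg' Hu) Hs1.
  rewrite E4; apply: f_lb => //; exists g0, a1; by split.
have [e [He [He1 He2]]] := min_pos Hd1 Hd2.
exists e; split => // y Hy Hxy; split.
  apply: (lt_le_trans Ha1); apply: f_glb => //.
  exact: Hc2 (lt_le_trans Hxy He2).
have Hgx := act_in ac Hg Hx.
have Hgy := act_in ac Hg Hy.
have H1 : lt (dX (ac g y) (ac g x)) (add (add b (neg s)) (zero R)).
  rewrite addr0 msdist_sym //; apply: Hc1 => //; last exact: lt_le_trans Hxy He1.
  by rewrite d_self.
rewrite addr0 in H1.
have Hle : ~ lt s (dX (ac g x) al) by rewrite -Es; exact: lt_irr.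
have := d_tri_lt_le Hgy Hgx (HAX Hal) H1 Hle.
rewrite E2 => H2.
apply: le_lt_trans H2; apply: f_lb => //; exists g, al; by split.
Qed.


Lemma main_ne : exists f : ('I_n -> M) -> M,
    def_fun ptsX f /\ continuous_on f /\ invariant_fun ac f /\
    (forall x, ptsX x -> (f x = zero R <-> A x)).
Proof.
exists f; split; first exact: f_def.
split; first exact: f_cont.
split; first exact: f_inv.
exact: f_zero.
Qed.

End NE.

End Prob.

Theorem corollary5p11 (R : dclomStructure) (G : defMetricGroup R)
  (X : defMetricSpace R) (a : defAction G X)
  (A : ('I_(msdim X) -> carrier R) -> Prop) :
  def_compact G ->
  defn A -> closed_in A -> invariant_set a A ->
  exists f : ('I_(msdim X) -> carrier R) -> carrier R,
    def_fun (mspts X) f /\ continuous_on f /\ invariant_fun a f /\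
    (forall x, mspts X x -> (f x = zero R <-> A x)).
Proof.
move=> Hc HA Hcl Hinv.
case: (classic (exists x, A x)) => Hne.
  exact: (main_ne Hc HA Hcl Hinv Hne).
exact: main_empty.
Qed.
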